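(* If a hyperideal $I$ of $R$ is 1-absorbing prime but not prime, then $R$ is a local multiplicative hyperring.
   Context: Throughout, $R$ is a commutative multiplicative hyperring: $(R,+)$ is an abelian group and $\circ:R\times R\to P^*(R)$ is a commutative, associative hyperoperation with $a\circ(b+c)\subseteq a\circ b+a\circ c$ and $a\circ(-b)=(-a)\circ b=-(a\circ b)$; $A\circ B=\bigcup_{a\in A,b\in B}a\circ b$. $R$ has an identity $1$ ($a\in a\circ1$); $x$ is a unit if $1\in x\circ y$ for some $y$. Hyperideals are nonempty subsets closed under subtraction and absorbing $r\circ a\subseteq I$; all are assumed $\mathbf{C}$-hyperideals (for every finite product $A=r_1\circ\cdots\circ r_n$, $A\cap I\ne\emptyset$ implies $A\subseteq I$). Prime hyperideal: proper $P$ with $x\circ y\subseteq P\Rightarrow x\in P$ or $y\in P$. 1-absorbing prime hyperideal: proper $I$ such that for all nonunit $x,y,z$, $x\circ y\circ z\subseteq I$ implies $x\circ y\subseteq I$ or $z\in I$. $R$ is local if it has a unique maximal hyperideal. *)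

(* Defs.v *)
(* the additive group (R,+) is a zmodType; the hyperoperation
   is a relation  hmul a b x  meaning  x \in a o b. Subsets are predicates R -> Prop. *)
From mathcomp Require Import all_boot all_algebra.
Set Implicit Arguments. Unset Strict Implicit. Unset Printing Implicit Defensive.
Import GRing.Theory.
Local Open Scope ring_scope.

Section Hyper.
Variable R : zmodType.
Variable hmul : R -> R -> R -> Prop.

Definition sub_set (A B : R -> Prop) : Prop := forall x, A x -> B x.
Definition eq_set (A B : R -> Prop) : Prop := forall x, A x <-> B x.
Definition single (a : R) : R -> Prop := fun x => x = a.

Definition setmul (A B : R -> Prop) : R -> Prop :=
  fun x => exists a b, A a /\ B b /\ hmul a b x.

Definition setadd (A B : R -> Prop) : R -> Prop :=
  fun x => exists a b, A a /\ B b /\ x = a + b.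
Definition setopp (A : R -> Prop) : R -> Prop := fun x => A (- x).

Definition is_comm_mhyperring (one : R) : Prop :=
  [/\ (forall a b, exists x, hmul a b x),
      (forall a b, eq_set (hmul a b) (hmul b a)),
      ((forall a b c, eq_set (setmul (hmul a b) (single c))
                            (setmul (single a) (hmul b c))) /\
      (forall a b c, sub_set (hmul a (b + c)) (setadd (hmul a b) (hmul a c)))),
      (forall a b, eq_set (hmul a (- b)) (hmul (- a) b)
                   /\ eq_set (hmul a (- b)) (setopp (hmul a b)))
    & (forall a, hmul a one a)].

Definition hunit (one x : R) : Prop := exists y, hmul x y one.

Definition hprod (r : R) (rs : seq R) : R -> Prop :=
  foldl (fun A x => setmul A (single x)) (single r) rs.

Definition C_condition (I : R -> Prop) : Prop :=
  forall r rs, (exists x, hprod r rs x /\ I x) -> sub_set (hprod r rs) I.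

(* hyperideal (all hyperideals are assumed to be C-hyperideals) *)
Definition hyperideal (I : R -> Prop) : Prop :=
  [/\ (exists x, I x),
      (forall a b, I a -> I b -> I (a - b)),
      (forall r a, I a -> sub_set (hmul r a) I)
    & C_condition I].

Definition proper (I : R -> Prop) : Prop := exists x, ~ I x.

Definition prime_hyperideal (P : R -> Prop) : Prop :=
  [/\ hyperideal P, proper P &
      forall x y, sub_set (hmul x y) P -> P x \/ P y].

Definition one_absorbing_prime (one : R) (I : R -> Prop) : Prop :=
  [/\ hyperideal I, proper I &
      forall x y z, ~ hunit one x -> ~ hunit one y -> ~ hunit one z ->
        sub_set (setmul (hmul x y) (single z)) I ->
        sub_set (hmul x y) I \/ I z].

Definition maximal_hyperideal (M : R -> Prop) : Prop :=
  [/\ hyperideal M, proper M &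
      forall J, hyperideal J -> sub_set M J -> eq_set J M \/ eq_set J (fun _ => True)].

Definition local_hyperring : Prop :=
  exists M, maximal_hyperideal M /\ forall N, maximal_hyperideal N -> eq_set N M.

End Hyper.

(* Main.v *)
Require Import Defs.
From mathcomp Require Import all_boot all_algebra.
From Stdlib Require Import Classical.
Import GRing.Theory.
Local Open Scope ring_scope.

Theorem mainTheorem3 (R : zmodType) (hmul : R -> R -> R -> Prop) (one : R)
  (HR : is_comm_mhyperring hmul one) (I : R -> Prop) :
  one_absorbing_prime hmul one I -> ~ prime_hyperideal hmul I ->
  local_hyperring hmul.
Proof.
case: HR => Htot Hcomm [Hassoc Hdist] Hneg Hid.
move=> [HI Hprop Habs] Hnp.
have unitK : forall (J : R -> Prop), (forall r a, J a -> sub_set (hmul r a) J) ->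
    forall u z, hunit hmul one u -> sub_set (hmul u z) J -> J z.
  move=> J HJ u z [u' Hu] Hs.
  have H1 : setmul hmul (hmul u' u) (single z) z.
    exists one, z; split; first by apply/Hcomm.
    split; first by [].
    by apply/Hcomm; apply: Hid.
  case: (proj1 (Hassoc u' u z z) H1) => a [w [Ha [Hw Hz]]].
  rewrite /single in Ha; subst a.
  exact: (HJ u' w (Hs w Hw) z Hz).
have unit_l : forall a b t, hmul a b t -> hunit hmul one t -> hunit hmul one a.
  move=> a b t Ht [v Hv].
  have H1 : setmul hmul (hmul a b) (single v) one by exists t, v.
  case: (proj1 (Hassoc a b v one) H1) => a' [w [Ha [Hw H1']]].
  rewrite /single in Ha; subst a'.
  by exists w.
have unit_r : forall a b t, hmul a b t -> hunit hmul one t -> hunit hmul one b.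
  move=> a b t Ht Hu; apply: (unit_l b a t) => //; by apply/Hcomm.
case: (HI) => [[i0 Hi0] Hsub Hmul HC].
have I0 : I 0 by rewrite -(subrr i0); apply: Hsub.
have Iopp : forall a, I a -> I (- a) by move=> a Ha; rewrite -sub0r; apply: Hsub.
have Iadd : forall a b, I a -> I b -> I (a + b).
  by move=> a b Ha Hb; rewrite -(opprK b); apply: Hsub => //; apply: Iopp.
have [x [y [Hxy [Hx Hy]]]] : exists x y, sub_set (hmul x y) I /\ ~ I x /\ ~ I y.
  apply: NNPP => Hn; apply: Hnp; split => //.
  move=> a b Hab; apply: NNPP => Hn2; apply: Hn; exists a, b; split => //.
  by split => Hc; apply: Hn2; [left|right].
have Hxnu : ~ hunit hmul one x.
  move=> Hu; apply: Hy; exact: (unitK I Hmul x y Hu Hxy).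
have Hynu : ~ hunit hmul one y.
  move=> Hu; apply: Hx; apply: (unitK I Hmul y x Hu) => w Hw; apply: Hxy; by apply/Hcomm.
have nuX : forall a, ~ hunit hmul one a -> sub_set (hmul a x) I.
  move=> a Ha.
  have : sub_set (hmul a x) I \/ I y.
    apply: Habs => // z Hz.
    case: (proj1 (Hassoc a x y z) Hz) => a' [w [Ha' [Hw Hz']]].
    rewrite /single in Ha'; subst a'.
    exact: (Hmul a w (Hxy w Hw) z Hz').
  by case.
pose M := fun t => ~ hunit hmul one t.
have Hone : hunit hmul one one by exists one; apply: Hid.
have full : forall (J : R -> Prop), hyperideal hmul J -> forall u, J u -> hunit hmul one u ->
    forall z, J z.
  move=> J [_ _ HJm _] u Ju [u' Hu] z.
  have J1 : J one by apply: (HJm u' u Ju); apply/Hcomm.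
  exact: (HJm z one J1 z (Hid z)).
have Mhyp : hyperideal hmul M.
  split.
  - by exists x.
  - move=> a b Ha Hb Hu.
    have Hb' : M (- b).
      move=> [v Hv]; apply: Hb; exists (- v).
      by apply/(proj1 (Hneg b v)).
    apply: Hx; apply: (unitK I Hmul (a - b) x Hu) => w Hw.
    have Hw' := Hdist x a (- b) w (proj1 (Hcomm _ _ _) Hw).
    case: Hw' => p [q [Hp [Hq ->]]].
    apply: Iadd; [apply: (nuX a Ha) | apply: (nuX (- b) Hb')]; by apply/Hcomm.
  - move=> r a Ha t Ht Hu; apply: Ha; exact: (unit_r r a t Ht Hu).
  - move=> r rs [t [Ht Mt]] s Hs; move=> Hu.
    have [w Hw] := Htot t x.
    have Hin : hprod hmul r (rcons rs x) w by rewrite /hprod -cats1 foldl_cat; exists t, x.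
    have := HC r (rcons rs x) (ex_intro _ w (conj Hin (nuX t Mt w Hw))).
    move=> Hall; apply: Hx; apply: (unitK I Hmul s x Hu) => w' Hw'.
    apply: Hall; by rewrite /hprod -cats1 foldl_cat; exists s, x.
have Mmax : maximal_hyperideal hmul M.
  split => //; first by exists one.
  move=> J HJ HMJ.
  case: (classic (exists u, J u /\ hunit hmul one u)) => [[u [Ju Hu]]|Hn].
    by right => z; split => // _; exact: (full J HJ u Ju Hu).
  left => z; split; last exact: HMJ.
  by move=> Jz Hu; apply: Hn; exists z.
exists M; split => // N [HN [n0 Hn0] HNmax].
have NM : sub_set N M by move=> z Nz Hu; apply: Hn0; exact: (full N HN z Nz Hu).
case: (HNmax M Mhyp NM) => [He|He].
  by move=> z; split => Hz; [apply/He | apply/He].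
by exfalso; exact: (proj2 (He one) Logic.I Hone).
Qed.
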